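(* There is a constant $c$ such that for every $\ell\in\mathbb N$ and every finite alphabet $\Gamma_2$ disjoint from $\Gamma_1=\{0,1,\mathsf{inc},\mathsf{dec}\}$, there are $\ell$ DFAs $B_1,\dots,B_\ell$ over $\Gamma_1\cup\Gamma_2$, each with at most $c\cdot\ell$ states, such that $L_\ell=\bigcap_{i=1}^{\ell}L(B_i)$.
   Context: For a word $b_1b_2\cdots b_\ell\in\{0,1\}^\ell$ let $\mathsf{val}(b_1\cdots b_\ell)=\sum_i b_i 2^{\ell-i}$. Interpret $\mathsf{inc}(n)=n+1$, $\mathsf{dec}(n)=n-1$ and $a(n)=n$ for $a\in\Gamma_2$. Then $L_\ell$ is the set of words $n_0o_1n_1o_2n_2\cdots o_kn_k$ with $k\ge 0$, each $n_i\in\{0,1\}^\ell$, each $o_i\in\{\mathsf{inc},\mathsf{dec}\}\cup\Gamma_2$, and $\mathsf{val}(n_i)\equiv o_i(\mathsf{val}(n_{i-1}))\pmod{2^\ell}$ for all $0<i\le k$. *)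

(* Defs.v *)
From HB Require Import structures.
From mathcomp Require Import all_boot all_order all_algebra.
Set Implicit Arguments. Unset Strict Implicit. Unset Printing Implicit Defensive.
Import Order.TTheory GRing.Theory Num.Theory.

Inductive gamma1 := Zero | One | Inc | Dec.

Definition gamma1_code (a : gamma1) : 'I_4 :=
  match a with Zero => inord 0 | One => inord 1 | Inc => inord 2 | Dec => inord 3 end.
Definition gamma1_decode (i : 'I_4) : gamma1 :=
  match val i with 0 => Zero | 1 => One | 2 => Inc | _ => Dec end.
Lemma gamma1_codeK : cancel gamma1_code gamma1_decode.
Proof. by case; rewrite /gamma1_decode /= inordK. Qed.
HB.instance Definition _ := Finite.copy gamma1 (can_type gamma1_codeK).

(* The full alphabet Gamma_1 ∪ Gamma_2, Gamma_2 disjoint from Gamma_1: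
   realised as a disjoint sum. *)
Definition alphabet (G2 : finType) : finType := (gamma1 + G2)%type.

Record dfa (A : finType) := DFA {
  dfa_state : finType;
  dfa_init  : dfa_state;
  dfa_trans : dfa_state -> A -> dfa_state;
  dfa_final : {set dfa_state}
}.

Definition dfa_accept (A : finType) (B : dfa A) (w : seq A) : bool :=
  foldl (@dfa_trans A B) (@dfa_init A B) w \in @dfa_final A B.

(* val(b_1 ... b_l) = sum_i b_i 2^(l-i) *)
Definition bval (s : seq bool) : nat := foldl (fun acc (b : bool) => acc.*2 + b) 0 s.

Definition enc_block (G2 : finType) (s : seq bool) : seq (alphabet G2) :=
  [seq (inl (if b then One else Zero) : alphabet G2) | b <- s].

Definition op_sem (G2 : finType) (o : alphabet G2) : option (int -> int) :=
  match o with
  | inl Inc => Some (fun n => n + 1)%R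
  | inl Dec => Some (fun n => n - 1)%R
  | inl _ => None
  | inr _ => Some (fun n => n)
  end.

Definition step_ok (G2 : finType) (l : nat) (prev : seq bool)
    (on : alphabet G2 * seq bool) : Prop :=
  [/\ size on.2 = l &
      exists f, op_sem on.1 = Some f /\
        ((bval on.2)%:Z = f (bval prev)%:Z %[mod (2 ^ l)%:Z])%Z ].

Fixpoint chain_ok (G2 : finType) (l : nat) (prev : seq bool)
    (rest : seq (alphabet G2 * seq bool)) : Prop :=
  match rest with
  | [::] => True
  | on :: rest' => step_ok l prev on /\ chain_ok l on.2 rest'
  end.

Definition L_lang (G2 : finType) (l : nat) (w : seq (alphabet G2)) : Prop :=
  exists (n0 : seq bool) (rest : seq (alphabet G2 * seq bool)),
    [/\ size n0 = l, chain_ok l n0 rest &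
        w = enc_block G2 n0 ++ flatten [seq on.1 :: enc_block G2 on.2 | on <- rest]].

(* Main.v *)
Require Import Defs.
From HB Require Import structures.
From mathcomp Require Import all_boot all_order all_algebra.
From mathcomp Require Import zify.

Lemma bval_acc (s : seq bool) acc :
  foldl (fun acc (b : bool) => acc.*2 + b) acc s = acc * 2 ^ size s + bval s.
Proof.
elim: s acc => [|b s IH] acc /=; first by rewrite /bval /= muln1 addn0.
rewrite /bval /= IH [in RHS]IH expnS; lia.
Qed.

Lemma bval_cons (b : bool) s : bval (b :: s) = b * 2 ^ size s + bval s.
Proof. by rewrite /bval /= bval_acc. Qed.

Lemma bval_lt s : bval s < 2 ^ size s.
Proof.
elim: s => [|b s IH]; first by [].
rewrite bval_cons /= expnS; case: b => /=; lia.
Qed.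

Lemma bval_inj s t : size s = size t -> bval s = bval t -> s = t.
Proof.
elim: s t => [|a s IH] [|b t] //= [Hst].
rewrite !bval_cons Hst => E.
have h1 := bval_lt s; have h2 := bval_lt t.
rewrite Hst in h1.
have Eab : a = b by case: a b E => [] [] /=; lia.
subst b; congr (_ :: _); apply: IH => //; lia.
Qed.

Lemma bval_all s : all id s = ((bval s).+1 == 2 ^ size s).
Proof.
elim: s => [|b s IH] //=.
rewrite IH bval_cons expnS; have := bval_lt s.
case: b => /=; lia.
Qed.

Lemma bval_allN s : all negb s = (bval s == 0).
Proof.
elim: s => [|b s IH] //=.
rewrite IH bval_cons; have := bval_lt s.
case: b => /=; lia.
Qed.

Fixpoint succb (s : seq bool) : seq bool :=
  if s is x :: s' then (x (+) all id s') :: succb s' else [::].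
Fixpoint predb (s : seq bool) : seq bool :=
  if s is x :: s' then (x (+) all negb s') :: predb s' else [::].

Lemma size_succb s : size (succb s) = size s.
Proof. by elim: s => //= x s ->. Qed.
Lemma size_predb s : size (predb s) = size s.
Proof. by elim: s => //= x s ->. Qed.

Lemma nth_succb s j : j < size s -> nth false (succb s) j = nth false s j (+) all id (drop j.+1 s).
Proof.
elim: s j => [|x s IH] [|j] //= Hj; first by rewrite drop0.
exact: IH.
Qed.
Lemma nth_predb s j : j < size s -> nth false (predb s) j = nth false s j (+) all negb (drop j.+1 s).
Proof.
elim: s j => [|x s IH] [|j] //= Hj; first by rewrite drop0.
exact: IH.
Qed.

Lemma bval_succb s : bval (succb s) = (bval s).+1 %% 2 ^ size s.
Proof.
elim: s => [|x s IH] //=.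
rewrite !bval_cons size_succb IH bval_all expnS.
have h := bval_lt s.
have hp : 0 < 2 ^ size s by rewrite expn_gt0.
set N := 2 ^ size s in h hp IH *.
case: eqP => [E|NE].
  rewrite E modnn; case: x => /=.
    have -> : (1 * N + bval s).+1 = 2 * N by lia.
    by rewrite modnn.
  have -> : (0 * N + bval s).+1 = N by lia.
  rewrite modn_small; lia.
rewrite addbF (modn_small (m := (bval s).+1)); last lia.
rewrite modn_small //; case: x => /=; lia.
Qed.

Lemma bval_predb s : bval (predb s) = (bval s + 2 ^ size s).-1 %% 2 ^ size s.
Proof.
elim: s => [|x s IH] //=.
rewrite !bval_cons size_predb IH bval_allN expnS.
have h := bval_lt s.
have hp : 0 < 2 ^ size s by rewrite expn_gt0.
set N := 2 ^ size s in h hp IH *.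
case: eqP => [E|NE].
  rewrite E add0n modn_small; last lia.
  case: x => /=.
    have -> : (1 * N + 0 + 2 * N).-1 = 2 * N + (N.-1) by lia.
    by rewrite modnDl modn_small; lia.
  by rewrite modn_small; lia.
rewrite addbF.
have -> : (bval s + N).-1 = N + (bval s).-1 by lia.
rewrite modnDl modn_small; last lia.
have -> : (x * N + bval s + 2 * N).-1 = 2 * N + (x * N + (bval s).-1) by lia.
rewrite modnDl modn_small; case: x => /=; lia.
Qed.

Lemma modeq_bval (n : nat) (a t : seq bool) (k : int) :
  size a = n -> size t = n ->
  ((bval t)%:Z = k %[mod (2 ^ n)%:Z])%Z ->
  (a = t <-> ((bval a)%:Z = k %[mod (2 ^ n)%:Z])%Z).
Proof.
move=> Ha Htn Ht; split=> [->//|Ha'].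
apply: bval_inj; first by rewrite Ha Htn.
have : ((bval a)%:Z %% (2 ^ n)%:Z)%Z = ((bval t)%:Z %% (2 ^ n)%:Z)%Z by rewrite Ha' Ht.
rewrite !modz_nat !modn_small -?Ha -?Htn ?bval_lt //.
  by case.
by rewrite Ha -Htn bval_lt.
Qed.

Lemma succb_mod p : ((bval (succb p))%:Z = (bval p)%:Z + 1 %[mod (2 ^ size p)%:Z])%Z.
Proof.
rewrite bval_succb modz_nat modn_mod.
have -> : ((bval p)%:Z + 1 = ((bval p).+1)%:Z)%R by lia.
by rewrite modz_nat.
Qed.

Lemma predb_mod p : ((bval (predb p))%:Z = (bval p)%:Z - 1 %[mod (2 ^ size p)%:Z])%Z.
Proof.
rewrite bval_predb modz_nat modn_mod.
have hp : 0 < 2 ^ size p by rewrite expn_gt0.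
rewrite -(modzDr ((bval p)%:Z - 1)).
have -> : ((bval p)%:Z - 1 + (2 ^ size p)%:Z = ((bval p + 2 ^ size p).-1)%:Z)%R by lia.
by rewrite modz_nat.
Qed.

Section DFA.
Variables (G2 : finType) (l j : nat).
Hypothesis jl : j < l.

Definition St : finType :=
  option (('I_l * option bool * bool * bool * bool) + (bool * bool * bool))%type.

Definition mkIn (p : nat) e x o z : St :=
  match insub p with Some q => Some (inl (q, e, x, o, z)) | None => Some (inr (x, o, z)) end.
Definition Btw x o z : St := Some (inr (x, o, z)).

Definition expect (c : alphabet G2) x o z : option bool :=
  match c with
  | inl Zero | inl One => None
  | inl Inc => Some (x (+) o)
  | inl Dec => Some (x (+) z)
  | inr _ => Some x end.
Definition bitof (c : alphabet G2) : option bool :=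
  match c with inl Zero => Some false | inl One => Some true | _ => None end.
Definition conflict (e : option bool) (b : bool) := if e is Some e' then e' != b else false.

Definition trans (s : St) (c : alphabet G2) : St :=
  match s with
  | None => None
  | Some (inr (x, o, z)) =>
      match expect c x o z with Some e => mkIn 0 (Some e) false true true | None => None end
  | Some (inl (p, e, x, o, z)) =>
      match bitof c with None => None | Some b =>
        if val p < j then mkIn (val p).+1 e x o z
        else if val p == j then (if conflict e b then None else mkIn (val p).+1 e b true true)
        else mkIn (val p).+1 e x (o && b) (z && ~~ b) end
  end.

Definition fin : {set St} := [set s : St | if s is Some (inr _) then true else false].

Definition initS : St := mkIn 0 None false true true.

Definition mkB : dfa (alphabet G2) := @DFA _ St initS trans fin.

Lemma foldl_dead w : foldl trans None w = None.
Proof. by elim: w. Qed.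

Lemma bitof_enc b : bitof (inl (if b then One else Zero)) = Some b.
Proof. by case: b. Qed.

Lemma block_run s p e x o z : p + size s = l ->
  foldl trans (mkIn p e x o z) (enc_block G2 s) =
  if p <= j then
    (if conflict e (nth false s (j - p)) then None
     else Btw (nth false s (j - p)) (all id (drop (j - p).+1 s)) (all negb (drop (j - p).+1 s)))
  else Btw x (o && all id s) (z && all negb s).
Proof.
elim: s p e x o z => [|b s IH] p e x o z /=.
  rewrite addn0 => ->; rewrite /mkIn insubF ?ltnn //.
  by rewrite leqNgt jl /= !andbT.
move=> Hp.
have pl : p < l by lia.
rewrite /mkIn insubT /=.
have -> : (match (if b then One else Zero) with Zero => Some false | One => Some true | _ => None end) = Some b by case: b.
case: (ltngtP p j) => Hpj.
- rewrite IH; last lia.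
  have -> : p.+1 <= j by [].
  by have -> : j - p = (j - p.+1).+1 by lia.
- rewrite IH; last lia.
  have -> : p.+1 <= j = false by lia.
  by rewrite !andbA.
- subst p; rewrite subnn /=.
  case: (conflict e b); first by rewrite foldl_dead.
  rewrite IH; last lia.
  by rewrite ltnn drop0.
Qed.

Definition bs (a : seq bool) : St :=
  Btw (nth false a j) (all id (drop j.+1 a)) (all negb (drop j.+1 a)).
Definition expj (c : alphabet G2) (a : seq bool) :=
  expect c (nth false a j) (all id (drop j.+1 a)) (all negb (drop j.+1 a)).

Lemma block0 a e : size a = l ->
  foldl trans (mkIn 0 e false true true) (enc_block G2 a) =
  if conflict e (nth false a j) then None else bs a.
Proof. by move=> Ha; rewrite block_run ?Ha // leq0n subn0. Qed.

Fixpoint valid (prev : seq bool) (rest : seq (alphabet G2 * seq bool)) : bool :=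
  if rest is on :: r then (expj on.1 prev == Some (nth false on.2 j)) && valid on.2 r
  else true.

Definition flat (rest : seq (alphabet G2 * seq bool)) :=
  flatten [seq on.1 :: enc_block G2 on.2 | on <- rest].

Lemma chain_run prev rest : all (fun on => size on.2 == l) rest ->
  (foldl trans (bs prev) (flat rest) \in fin) = valid prev rest.
Proof.
elim: rest prev => [|[c a] r IH] prev /=.
  by rewrite inE.
move=> /andP [/eqP Ha Hr].
rewrite foldl_cat /=.
rewrite /bs /= -/(expj c prev).
case: (expj c prev) => [e|] /=; last by rewrite !foldl_dead inE.
rewrite block0 //= /conflict.
case: (e =P nth false a j) => [<-|NE] /=.
  by rewrite eqxx /= IH.
have -> : (Some e == Some (nth false a j)) = false by apply/eqP; case.
by rewrite foldl_dead inE.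
Qed.

Definition pos (st : St) : nat := if st is Some (inl (p, _, _, _, _)) then val p else l.
Definition isop (c : alphabet G2) := bitof c == None.

Lemma pos_mkIn n e x o z : n <= l -> pos (mkIn n e x o z) = n.
Proof.
move=> Hn; rewrite /mkIn; case: insubP => [q _ <-|] //=.
rewrite -leqNgt => H; lia.
Qed.

Lemma bitof_some c b : bitof c = Some b -> c = inl (if b then One else Zero).
Proof. by case: c => [[]|] //= [<-]. Qed.

Lemma expect_isop c x o z e : expect c x o z = Some e -> isop c.
Proof. by case: c => [[]|]. Qed.

Lemma parse_word w st : foldl trans st w \in fin ->
  exists s rest, [/\ pos st + size s = l, all (fun on => size on.2 == l) rest,
    all (fun on => isop on.1) rest & w = enc_block G2 s ++ flat rest].
Proof.
elim: w st => [|c w IH] st /=.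
  case: st => [[[[[[p e] x] o] z]|[[x o] z]]|]; rewrite inE // => _.
  by exists [::], [::]; rewrite addn0.
case: st => [[[[[[p e] x] o] z]|[[x o] z]]|] /=; last by rewrite foldl_dead inE.
- case Hc: (bitof c) => [b|]; last by rewrite foldl_dead inE.
  have Hc' := @bitof_some c b Hc.
  have pl := ltn_ord p.
  have K : forall e' x' o' z', foldl trans (mkIn (val p).+1 e' x' o' z') w \in fin ->
      exists s rest, [/\ pos (Some (inl (p, e, x, o, z))) + size s = l,
        all (fun on => size on.2 == l) rest,
        all (fun on => isop on.1) rest & c :: w = enc_block G2 s ++ flat rest].
    move=> e' x' o' z' /IH [s [rest [H1 H2 H3 H4]]].
    exists (b :: s), rest; rewrite pos_mkIn // in H1; split => //=.
      by move: H1; case: p {pl Hc Hc'} => pp Hpp /= H1; lia.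
    by rewrite H4 Hc'.
  case: ifP => _; first exact: K.
  case: ifP => _; last exact: K.
  case: ifP => _; last exact: K.
  by rewrite foldl_dead inE.
- case He: (expect c x o z) => [e|]; last by rewrite foldl_dead inE.
  move=> /IH [s [rest [H1 H2 H3 H4]]].
  have l0 : 0 < l by lia.
  rewrite pos_mkIn // add0n in H1.
  exists [::], ((c, s) :: rest); split => //=.
  - by rewrite addn0.
  - by rewrite H1 eqxx.
  - by rewrite (@expect_isop c x o z e He).
  by rewrite H4.
Qed.

Lemma accept_enc (n0 : seq bool) rest : size n0 = l ->
  foldl trans initS (enc_block G2 n0 ++ flat rest) = foldl trans (bs n0) (flat rest).
Proof. by move=> H; rewrite foldl_cat /initS block0. Qed.

End DFA.

Lemma nth_iff (a t : seq bool) : size a = size t ->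
  (a = t <-> forall j, j < size t -> nth false t j = nth false a j).
Proof.
move=> Hs; split => [->//|H].
apply: (eq_from_nth (x0 := false)) => // i Hi.
by rewrite H // -Hs.
Qed.

Lemma step_iff (G2 : finType) l prev (c : alphabet G2) a :
  size prev = l -> size a = l -> isop G2 c ->
  (forall j, j < l -> expj G2 j c prev == Some (nth false a j)) <-> step_ok l prev (c, a).
Proof.
move=> Hp Ha; rewrite /step_ok /=.
case: c => [[]|g] //= _.
- have E : forall j, j < l -> expj G2 j (inl Inc) prev = Some (nth false (succb prev) j).
    by move=> j Hj; rewrite /expj /= nth_succb // Hp.
  have M := succb_mod prev; rewrite Hp in M.
  have {}M := @modeq_bval l a _ _ Ha (etrans (size_succb prev) Hp) M.
  split.
  + move=> H; split => //; eexists; split; first reflexivity.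
    apply/M; apply/nth_iff; first by rewrite size_succb Hp.
    rewrite size_succb Hp => j Hj.
    by have := H j Hj; rewrite nth_succb ?Hp // => /eqP [].
  + case=> _ [f [[<-]] /M Ea] j Hj.
    by rewrite Ea nth_succb ?Hp.
- have E : forall j, j < l -> expj G2 j (inl Dec) prev = Some (nth false (predb prev) j).
    by move=> j Hj; rewrite /expj /= nth_predb // Hp.
  have M := predb_mod prev; rewrite Hp in M.
  have {}M := @modeq_bval l a _ _ Ha (etrans (size_predb prev) Hp) M.
  split.
  + move=> H; split => //; eexists; split; first reflexivity.
    apply/M; apply/nth_iff; first by rewrite size_predb Hp.
    rewrite size_predb Hp => j Hj.
    by have := H j Hj; rewrite nth_predb ?Hp // => /eqP [].
  + case=> _ [f [[<-]] /M Ea] j Hj.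
    by rewrite Ea nth_predb ?Hp.
- have E : forall j, j < l -> expj G2 j (inr g) prev = Some (nth false prev j).
    by [].
  have M := @modeq_bval l a prev (bval prev)%:Z Ha Hp erefl.
  split.
  + move=> H; split => //; eexists; split; first reflexivity.
    apply/M; apply/nth_iff; first by rewrite Hp.
    rewrite Hp => j Hj.
    by have := H j Hj => /eqP [].
  + case=> _ [f [[<-]] /M Ea] j Hj.
    by rewrite Ea.
Qed.

Lemma chain_iff (G2 : finType) l prev (rest : seq (alphabet G2 * seq bool)) :
  size prev = l -> all (fun on => size on.2 == l) rest -> all (fun on => isop G2 on.1) rest ->
  (forall j, j < l -> valid G2 j prev rest) <-> chain_ok l prev rest.
Proof.
elim: rest prev => [|[c a] r IH] prev /=; first by [].
move=> Hp /andP [/eqP Ha Hr] /andP [Hc Hr'].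
have S := @step_iff G2 l prev c a Hp Ha Hc.
have I := IH a Ha Hr Hr'.
split.
- move=> H; split; [apply/S|apply/I] => j Hj; by case/andP: (H j Hj).
- case=> /S H1 /I H2 j Hj; by rewrite H1 // H2.
Qed.

Lemma chain_props (G2 : finType) l prev (rest : seq (alphabet G2 * seq bool)) :
  chain_ok l prev rest ->
  all (fun on => size on.2 == l) rest /\ all (fun on => isop G2 on.1) rest.
Proof.
elim: rest prev => [|[c a] r IH] prev //=.
case=> [[Ha [f [Hf _]]] /IH [H1 H2]].
split; first by rewrite Ha eqxx.
by rewrite H2 andbT; move: Hf; clear; case: c => [[]|].
Qed.

Theorem claim4p7 :
  exists c : nat, forall (l : nat), 0 < l -> forall (G2 : finType),
    exists B : 'I_l -> dfa (alphabet G2),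
      (forall i, #|@dfa_state _ (B i)| <= c * l) /\
      (forall w : seq (alphabet G2), L_lang l w <-> (forall i, dfa_accept (B i) w)).
Proof.
exists 33 => l l0 G2.
exists (fun i : 'I_l => mkB G2 l i); split.
  move=> i /=.
  rewrite /St card_option card_sum !card_prod card_ord !card_option !card_bool.
  lia.
move=> w; split.
- case=> [n0 [rest [Hn0 Hch ->]]] i.
  have [H1 H2] := chain_props G2 l n0 rest Hch.
  rewrite /dfa_accept /=.
  have -> := @accept_enc G2 l i (ltn_ord i) n0 rest Hn0.
  rewrite (@chain_run G2 l i (ltn_ord i) n0 rest H1).
  exact: (proj2 (chain_iff G2 l n0 rest Hn0 H1 H2) Hch) i (ltn_ord i).
- move=> H.
  have H0 := H (Ordinal l0); rewrite /dfa_accept /= in H0.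
  have [s [rest [Hs H1 H2 Ew]]] := @parse_word G2 l 0 l0 w _ H0.
  rewrite /initS (@pos_mkIn l 0 l0) // add0n in Hs.
  exists s, rest; split => //.
  apply/(chain_iff G2 l s rest Hs H1 H2) => j Hj.
  have := H (Ordinal Hj); rewrite /dfa_accept /= Ew.
  have -> := @accept_enc G2 l j Hj s rest Hs.
  by rewrite (@chain_run G2 l j Hj s rest H1).
Qed.
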